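(* Let $m\ge2$ be an integer, $0<h\le1$, $E=(\alpha+i\mu)h^{2m/(m+1)}$ with $\alpha,\mu>0$ independent of $h$, $\varphi(x)=\int_0^x(E+m^{-1}y^{2m})^{1/2}dy$ (branch of the square root with positive imaginary part), $u(x)=(\varphi')^{-1/2}e^{i\varphi/h}$, $f=-h^2\big(\tfrac34(\varphi')^{-2}(\varphi'')^2-\tfrac12(\varphi')^{-1}\varphi'''\big)$, $\gamma=h^{1/(m+1)}$, and $\tilde u(x)=\chi(x/\gamma)u(x)$, where $\chi\in C_c^\infty(\mathbb{R})$ with $\chi\equiv1$ on $|s|\le1$ and $\operatorname{supp}\chi\subset[-2,2]$. Let \[ R=f\tilde u+[(hD)^2,\chi(x/\gamma)]u. \] Then \[ \|R\|_{L^2}=\mathcal O(h^{2m/(m+1)})\|\tilde u\|_{L^2}. \]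
   Context: $hD=-ih\,\frac{d}{dx}$, and $[\cdot,\cdot]$ is the commutator, with $\chi(x/\gamma)$ acting as a multiplication operator. The implicit constant is independent of $h$. *)

(* Defs.v *)
From Stdlib Require Import Reals.
From Coquelicot Require Import Coquelicot.

Open Scope R_scope.

Definition Cexp (z : C) : C :=
  (exp (fst z) * cos (snd z), exp (fst z) * sin (snd z)).

(* Principal square root (Re >= 0; for Im z > 0 it is the root with Im > 0). *)
Definition Csqrt (z : C) : C :=
  (sqrt ((Cmod z + fst z) / 2),
   (if Rle_dec 0 (snd z) then 1 else -1) * sqrt ((Cmod z - fst z) / 2)).

Definition CDerive (g : R -> C) (x : R) : C :=
  (Derive (fun t => fst (g t)) x, Derive (fun t => snd (g t)) x).

Definition CRInt (g : R -> C) (a b : R) : C :=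
  (RInt (fun t => fst (g t)) a b, RInt (fun t => snd (g t)) a b).

Definition L2norm (g : R -> C) : R :=
  sqrt (RInt_gen (fun x => (Cmod (g x)) ^ 2)
          (Rbar_locally m_infty) (Rbar_locally p_infty)).

Definition hD (h : R) (g : R -> C) : R -> C :=
  fun x => Cmult (Copp (Cmult Ci (RtoC h))) (CDerive g x).

Definition Eh (m : nat) (alpha mu h : R) : C :=
  Cmult (alpha, mu) (RtoC (Rpower h (2 * INR m / (INR m + 1)))).

Definition phi (m : nat) (alpha mu h : R) (x : R) : C :=
  CRInt (fun y => Csqrt (Cplus (Eh m alpha mu h) (RtoC (y ^ (2 * m) / INR m)))) 0 x.

Definition phi1 m alpha mu h : R -> C := CDerive (phi m alpha mu h).
Definition phi2 m alpha mu h : R -> C := CDerive (phi1 m alpha mu h).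
Definition phi3 m alpha mu h : R -> C := CDerive (phi2 m alpha mu h).

Definition uu (m : nat) (alpha mu h : R) (x : R) : C :=
  Cmult (Cinv (Csqrt (phi1 m alpha mu h x)))
        (Cexp (Cmult Ci (Cmult (phi m alpha mu h x) (RtoC (/ h))))).

Definition ff (m : nat) (alpha mu h : R) (x : R) : C :=
  let p1 := phi1 m alpha mu h x in
  let p2 := phi2 m alpha mu h x in
  let p3 := phi3 m alpha mu h x in
  Cmult (RtoC (- h ^ 2))
    (Cminus (Cmult (RtoC (3/4)) (Cmult (Cinv (Cmult p1 p1)) (Cmult p2 p2)))
            (Cmult (RtoC (1/2)) (Cmult (Cinv p1) p3))).

Definition gam (m : nat) (h : R) : R := Rpower h (1 / (INR m + 1)).

Definition chig (chi : R -> R) (m : nat) (h : R) (g : R -> C) : R -> C :=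
  fun x => Cmult (RtoC (chi (x / gam m h))) (g x).

Definition ut (chi : R -> R) m alpha mu h : R -> C := chig chi m h (uu m alpha mu h).

Definition Rem (chi : R -> R) (m : nat) (alpha mu h : R) : R -> C :=
  fun x =>
    Cplus (Cmult (ff m alpha mu h x) (ut chi m alpha mu h x))
      (Cminus (hD h (hD h (chig chi m h (uu m alpha mu h))) x)
              (chig chi m h (hD h (hD h (uu m alpha mu h))) x)).

(* Main.v *)
Require Import Defs.
From Stdlib Require Import Reals Lra Lia FunctionalExtensionality PropExtensionality Classical_Prop.
From Coquelicot Require Import Coquelicot.
Open Scope R_scope.

Definition D1 (f : R -> R) := forall x, ex_derive f x.
Definition D2 (f : R -> R) := D1 f /\ D1 (Derive f).

Lemma D2_ext f g : (forall x, f x = g x) -> D2 f -> D2 g.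
Proof. intros H; replace g with f; auto. apply functional_extensionality; auto. Qed.

Lemma D1_ext f g : (forall x, f x = g x) -> D1 f -> D1 g.
Proof. intros H; replace g with f; auto. apply functional_extensionality; auto. Qed.

Lemma D2_const c : D2 (fun _ => c).
Proof.
  split; intro x. apply ex_derive_const.
  apply (ex_derive_ext (fun _ => 0)). intro t; rewrite Derive_const; auto. apply ex_derive_const.
Qed.

Lemma D2_id : D2 (fun x => x).
Proof.
  split; intro x. apply ex_derive_id.
  apply (ex_derive_ext (fun _ => 1)). intro t. symmetry. apply is_derive_unique. auto_derive; auto.
  apply ex_derive_const.
Qed.

Lemma D2_plus f g : D2 f -> D2 g -> D2 (fun x => f x + g x).
Proof.
  intros [F1 F2] [G1 G2]; split; intro x.
  apply (ex_derive_plus f g); auto.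
  apply (ex_derive_ext (fun t => Derive f t + Derive g t)).
  intro t; rewrite Derive_plus; auto.
  apply (ex_derive_plus (Derive f) (Derive g)); auto.
Qed.

Lemma D2_opp f : D2 f -> D2 (fun x => - f x).
Proof.
  intros [F1 F2]; split; intro x.
  apply (ex_derive_opp f); auto.
  apply (ex_derive_ext (fun t => - Derive f t)).
  intro t; rewrite Derive_opp; auto.
  apply (ex_derive_opp (Derive f)); auto.
Qed.

Lemma D2_minus f g : D2 f -> D2 g -> D2 (fun x => f x - g x).
Proof.
  intros Hf Hg. apply (D2_ext (fun x => f x + - g x)). intro; ring.
  apply D2_plus; auto. apply D2_opp; auto.
Qed.

Lemma D2_mult f g : D2 f -> D2 g -> D2 (fun x => f x * g x).
Proof.
  intros [F1 F2] [G1 G2]; split; intro x.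
  apply ex_derive_mult; auto.
  apply (ex_derive_ext (fun t => Derive f t * g t + f t * Derive g t)).
  intro t; rewrite Derive_mult; auto.
  apply (ex_derive_plus (fun t => Derive f t * g t) (fun t => f t * Derive g t));
  apply ex_derive_mult; auto.
Qed.

Lemma D2_comp g f : D2 f -> (forall x, ex_derive g (f x) /\ ex_derive (Derive g) (f x)) ->
  D2 (fun x => g (f x)).
Proof.
  intros [F1 F2] H; split; intro x.
  apply ex_derive_comp; auto. apply H.
  apply (ex_derive_ext (fun t => Derive f t * Derive g (f t))).
  intro t; rewrite (Derive_comp g f t); auto. apply H.
  apply ex_derive_mult; auto. apply (ex_derive_comp (Derive g) f). apply H. auto.
Qed.

Lemma D2_sqrt f : D2 f -> (forall x, 0 < f x) -> D2 (fun x => sqrt (f x)).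
Proof.
  intros Hf Hp. apply D2_comp; auto. intro x. specialize (Hp x). split.
  auto_derive; lra.
  apply (ex_derive_ext_loc (fun y => / (2 * sqrt y))).
  assert (Hl : locally (f x) (fun y => 0 < y)).
  { apply (open_gt 0 (f x)); auto. }
  apply (filter_imp (fun y => 0 < y)); auto.
  intros y Hy. symmetry. apply is_derive_unique. auto_derive. lra. field.
  apply Rgt_not_eq, sqrt_lt_R0; auto.
  auto_derive. split. auto. split; auto. apply Rgt_not_eq. 
  apply Rmult_lt_0_compat. lra. apply sqrt_lt_R0; auto.
Qed.

Lemma D2_inv f : D2 f -> (forall x, f x <> 0) -> D2 (fun x => / f x).
Proof.
  intros Hf Hp. apply D2_comp; auto. intro x. specialize (Hp x). split.
  auto_derive; auto.
  apply (ex_derive_ext_loc (fun y => - / (y * y))).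
  assert (Hl : locally (f x) (fun y => y <> 0)).
  { destruct (Rlt_dec (f x) 0).
    apply (filter_imp (fun y => y < 0)). intros; lra. apply (open_lt 0 (f x)); auto.
    apply (filter_imp (fun y => 0 < y)). intros; lra. apply (open_gt 0 (f x)); lra. }
  apply (filter_imp (fun y => y <> 0)); auto.
  intros y Hy. symmetry. apply is_derive_unique. auto_derive. auto. field; auto.
  auto_derive. apply Rmult_integral_contrapositive; auto.
Qed.

Lemma D2_exp f : D2 f -> D2 (fun x => exp (f x)).
Proof.
  intros Hf. apply D2_comp; auto. intro x. split. auto_derive; auto.
  apply (ex_derive_ext exp). intro t. symmetry; apply is_derive_unique; auto_derive; auto; ring.
  auto_derive; auto.
Qed.

Lemma D2_cos f : D2 f -> D2 (fun x => cos (f x)).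
Proof.
  intros Hf. apply D2_comp; auto. intro x. split. auto_derive; auto.
  apply (ex_derive_ext (fun t => - sin t)). intro t. symmetry; apply is_derive_unique; auto_derive; auto; ring.
  auto_derive; auto.
Qed.

Lemma D2_sin f : D2 f -> D2 (fun x => sin (f x)).
Proof.
  intros Hf. apply D2_comp; auto. intro x. split. auto_derive; auto.
  apply (ex_derive_ext cos). intro t. symmetry; apply is_derive_unique; auto_derive; auto; ring.
  auto_derive; auto.
Qed.

Lemma D2_pow f n : D2 f -> D2 (fun x => f x ^ n).
Proof.
  intros Hf; induction n. simpl. apply D2_const.
  simpl. apply D2_mult; auto.
Qed.

Definition CD2 (G : R -> C) := D2 (fun x => fst (G x)) /\ D2 (fun x => snd (G x)).

Lemma CD2_ext F G : (forall x, F x = G x) -> CD2 F -> CD2 G.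
Proof. intros H; replace G with F; auto. apply functional_extensionality; auto. Qed.

Lemma CD2_mult F G : CD2 F -> CD2 G -> CD2 (fun x => Cmult (F x) (G x)).
Proof.
  intros [F1 F2] [G1 G2]; split; simpl.
  apply D2_minus; apply D2_mult; auto.
  apply D2_plus; apply D2_mult; auto.
Qed.

Lemma CD2_plus F G : CD2 F -> CD2 G -> CD2 (fun x => Cplus (F x) (G x)).
Proof. intros [F1 F2] [G1 G2]; split; simpl; apply D2_plus; auto. Qed.

Lemma CD2_RtoC f : D2 f -> CD2 (fun x => RtoC (f x)).
Proof. intros; split; simpl; auto. apply D2_const. Qed.

Lemma CD2_const z : CD2 (fun _ => z).
Proof. split; apply D2_const. Qed.

Lemma CD2_pair f g : D2 f -> D2 g -> CD2 (fun x => (f x, g x)).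
Proof. intros; split; simpl; auto. Qed.

Lemma CD2_Cinv G : CD2 G -> (forall x, fst (G x) ^ 2 + snd (G x) ^ 2 <> 0) ->
  CD2 (fun x => Cinv (G x)).
Proof.
  intros [G1 G2] Hn.
  assert (Hd : D2 (fun x => / (fst (G x) ^ 2 + snd (G x) ^ 2))).
  { apply (D2_inv (fun x => fst (G x) ^ 2 + snd (G x) ^ 2)); auto.
    apply (D2_plus (fun x => fst (G x) ^ 2) (fun x => snd (G x) ^ 2)); apply D2_pow; auto. }
  split.
  - apply (D2_ext (fun x => fst (G x) * / (fst (G x) ^ 2 + snd (G x) ^ 2))).
    intro x; reflexivity. apply (D2_mult (fun x => fst (G x))); auto.
  - apply (D2_ext (fun x => - snd (G x) * / (fst (G x) ^ 2 + snd (G x) ^ 2))).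
    intro x; reflexivity. apply (D2_mult (fun x => - snd (G x))); auto.
    apply (D2_opp (fun x => snd (G x))); auto.
Qed.

Lemma sqrt_gt_abs a b : b <> 0 -> Rabs a < sqrt (a ^ 2 + b ^ 2).
Proof.
  intro Hb. rewrite <- sqrt_Rsqr_abs. apply sqrt_lt_1_alt. split.
  apply Rle_0_sqr. unfold Rsqr. assert (0 < b^2). { apply pow2_gt_0; auto. } replace (a^2) with (a*a) by ring. lra.
Qed.

Lemma Csqrt_pos_im z : 0 < snd z ->
  Csqrt z = (sqrt ((sqrt (fst z ^ 2 + snd z ^ 2) + fst z) / 2),
             sqrt ((sqrt (fst z ^ 2 + snd z ^ 2) - fst z) / 2)).
Proof.
  intro H. unfold Csqrt, Cmod. destruct (Rle_dec 0 (snd z)); [|lra]. f_equal; ring.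
Qed.

Lemma Csqrt_fst_pos z : snd z <> 0 -> 0 < fst (Csqrt z).
Proof.
  intro H. unfold Csqrt, Cmod; cbn [fst snd]. apply sqrt_lt_R0.
  pose proof (sqrt_gt_abs (fst z) (snd z) H). pose proof (Rle_abs (- fst z)).
  rewrite Rabs_Ropp in H1. lra.
Qed.

Lemma Csqrt_snd_pos z : 0 < snd z -> 0 < snd (Csqrt z).
Proof.
  intro H. rewrite Csqrt_pos_im; auto; cbn [fst snd]. apply sqrt_lt_R0.
  pose proof (sqrt_gt_abs (fst z) (snd z) ltac:(lra)). pose proof (Rle_abs (fst z)). lra.
Qed.

Lemma CD2_Csqrt G : CD2 G -> (forall x, 0 < snd (G x)) -> CD2 (fun x => Csqrt (G x)).
Proof.
  intros [G1 G2] Hp. apply (CD2_ext (fun x => (sqrt ((sqrt (fst (G x) ^ 2 + snd (G x) ^ 2) + fst (G x)) / 2),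
             sqrt ((sqrt (fst (G x) ^ 2 + snd (G x) ^ 2) - fst (G x)) / 2)))).
  intro x; rewrite Csqrt_pos_im; auto.
  assert (Hm : D2 (fun x => sqrt (fst (G x) ^ 2 + snd (G x) ^ 2))).
  { apply D2_sqrt. apply D2_plus; apply D2_pow; auto.
    intro x. specialize (Hp x). assert (0 < snd (G x) ^2) by (apply pow2_gt_0; lra).
    assert (0 <= fst (G x) ^ 2) by (apply pow2_ge_0). lra. }
  apply CD2_pair; apply D2_sqrt; unfold Rdiv.
  apply D2_mult. apply D2_plus; auto. apply D2_const.
  intro x. pose proof (sqrt_gt_abs (fst (G x)) (snd (G x)) ltac:(specialize (Hp x); lra)).
  pose proof (Rle_abs (- fst (G x))). rewrite Rabs_Ropp in H0. 
  apply Rmult_lt_0_compat; lra.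
  apply D2_mult. apply D2_minus; auto. apply D2_const.
  intro x. pose proof (sqrt_gt_abs (fst (G x)) (snd (G x)) ltac:(specialize (Hp x); lra)).
  pose proof (Rle_abs (fst (G x))).
  apply Rmult_lt_0_compat; lra.
Qed.

Lemma CD2_Cexp G : CD2 G -> CD2 (fun x => Cexp (G x)).
Proof.
  intros [G1 G2]; split; unfold Cexp; simpl; apply D2_mult.
  apply D2_exp; auto. apply D2_cos; auto. apply D2_exp; auto. apply D2_sin; auto.
Qed.

Definition scl (k : R) (z : C) : C := (k * fst z, k * snd z).
Definition sc (c g : R) (G : R -> C) : R -> C := fun x => scl c (G (x / g)).
Definition CD1 (G : R -> C) := D1 (fun x => fst (G x)) /\ D1 (fun x => snd (G x)).

Lemma CD2_CD1 G : CD2 G -> CD1 G.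
Proof. intros [[A _] [B _]]; split; auto. Qed.

Lemma Derive_sc_comp f c g x : g <> 0 -> ex_derive f (x / g) ->
  Derive (fun t => c * f (t / g)) x = c / g * Derive f (x / g).
Proof.
  intros Hg Hf. rewrite Derive_scal.
  rewrite (Derive_comp f (fun t => t / g) x); auto.
  replace (Derive (fun t => t / g) x) with (/ g). unfold Rdiv; ring.
  symmetry; apply is_derive_unique. auto_derive; auto. field; auto.
  auto_derive; auto.
Qed.

Lemma CDerive_sc c g G : g <> 0 -> CD1 G -> CDerive (sc c g G) = sc (c / g) g (CDerive G).
Proof.
  intros Hg [G1 G2]. apply functional_extensionality; intro x.
  unfold CDerive, sc, scl; cbn [fst snd]. f_equal.
  apply (Derive_sc_comp (fun t => fst (G t))); auto.
  apply (Derive_sc_comp (fun t => snd (G t))); auto.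
Qed.

Lemma hD_sc h c g G : g <> 0 -> CD1 G -> hD h (sc c g G) = sc (c * h / g) g (hD 1 G).
Proof.
  intros Hg HG. unfold hD at 1. rewrite CDerive_sc; auto.
  apply functional_extensionality; intro x. unfold sc, scl, hD.
  destruct (CDerive G (x / g)) as [a b]. unfold Cmult, Copp, Ci, RtoC; cbn [fst snd].
  f_equal; unfold Rdiv; ring.
Qed.

Lemma CD1_hD1 G : CD2 G -> CD1 (hD 1 G).
Proof.
  intros [[_ G1] [_ G2]]. unfold hD, CDerive. split.
  - apply (D1_ext (fun x => fst (Copp (Cmult Ci (RtoC 1))) * Derive (fun t => fst (G t)) x
      - snd (Copp (Cmult Ci (RtoC 1))) * Derive (fun t => snd (G t)) x)).
    intro x; reflexivity.
    intro x. apply (ex_derive_minus (fun x => fst (Copp (Cmult Ci (RtoC 1))) * Derive (fun t => fst (G t)) x)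
      (fun x => snd (Copp (Cmult Ci (RtoC 1))) * Derive (fun t => snd (G t)) x));
    apply ex_derive_scal; auto.
  - apply (D1_ext (fun x => fst (Copp (Cmult Ci (RtoC 1))) * Derive (fun t => snd (G t)) x
      + snd (Copp (Cmult Ci (RtoC 1))) * Derive (fun t => fst (G t)) x)).
    intro x; reflexivity.
    intro x. apply (ex_derive_plus (fun x => fst (Copp (Cmult Ci (RtoC 1))) * Derive (fun t => snd (G t)) x)
      (fun x => snd (Copp (Cmult Ci (RtoC 1))) * Derive (fun t => fst (G t)) x));
    apply ex_derive_scal; auto.
Qed.

Lemma chig_sc chi m h c G :
  chig chi m h (sc c (gam m h) G) = sc c (gam m h) (fun s => Cmult (RtoC (chi s)) (G s)).
Proof.
  apply functional_extensionality; intro x. unfold chig, sc, scl.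
  destruct (G (x / gam m h)) as [a b]. unfold Cmult, RtoC; cbn [fst snd]. f_equal; ring.
Qed.

Lemma Cmult_scl a b z w : Cmult (scl a z) (scl b w) = scl (a * b) (Cmult z w).
Proof. destruct z, w; unfold scl, Cmult; cbn [fst snd]; f_equal; ring. Qed.

Lemma Cplus_scl a z w : Cplus (scl a z) (scl a w) = scl a (Cplus z w).
Proof. destruct z, w; unfold scl, Cplus; cbn [fst snd]; f_equal; ring. Qed.

Lemma Cminus_scl a z w : Cminus (scl a z) (scl a w) = scl a (Cminus z w).
Proof. destruct z, w; unfold scl, Cminus, Cplus, Copp; cbn [fst snd]; f_equal; ring. Qed.

Lemma CmultR_scl r a z : Cmult (RtoC r) (scl a z) = scl a (Cmult (RtoC r) z).
Proof. destruct z; unfold scl, Cmult, RtoC; cbn [fst snd]; f_equal; ring. Qed.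

Lemma scl_scl a b z : scl a (scl b z) = scl (a * b) z.
Proof. destruct z; unfold scl; cbn [fst snd]; f_equal; ring. Qed.

Lemma Cinv_scl a z : a <> 0 -> Cinv (scl a z) = scl (/ a) (Cinv z).
Proof.
  intro Ha. destruct z as [x y]. unfold scl, Cinv; cbn [fst snd].
  replace ((a * x) ^ 2 + (a * y) ^ 2) with (a * a * (x ^ 2 + y ^ 2)) by ring.
  destruct (Req_dec (x ^ 2 + y ^ 2) 0) as [E|E].
  - rewrite E, Rmult_0_r. unfold Rdiv; rewrite Rinv_0. f_equal; ring.
  - f_equal; field; auto.
Qed.

Lemma Csqrt_scl a z : 0 < a -> Csqrt (scl a z) = scl (sqrt a) (Csqrt z).
Proof.
  intro Ha. destruct z as [x y]. unfold scl, Csqrt, Cmod; cbn [fst snd].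
  replace ((a * x) ^ 2 + (a * y) ^ 2) with ((a * a) * (x ^ 2 + y ^ 2)) by ring.
  rewrite sqrt_mult_alt by nra. rewrite sqrt_square by lra.
  replace ((a * sqrt (x ^ 2 + y ^ 2) + a * x) / 2) with (a * ((sqrt (x ^ 2 + y ^ 2) + x) / 2)) by field.
  replace ((a * sqrt (x ^ 2 + y ^ 2) - a * x) / 2) with (a * ((sqrt (x ^ 2 + y ^ 2) - x) / 2)) by field.
  rewrite !sqrt_mult_alt by lra. f_equal.
  destruct (Rle_dec 0 (a * y)), (Rle_dec 0 y); try ring.
  - exfalso. apply n. apply Rnot_lt_le. intro. assert (a * y < 0) by (apply Rmult_pos_neg; lra). lra.
  - exfalso. apply n. apply Rmult_le_pos; lra.
Qed.



Lemma RInt_gen_noex (f : R -> R) Fa Fb : (forall l, ~ is_RInt_gen f Fa Fb l) -> RInt_gen f Fa Fb = 0.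
Proof.
  intro H. unfold RInt_gen, iota, lim. simpl. unfold R_complete_lim.
  rewrite (Lub_Rbar_eqset _ (fun _ => True)).
  2: { intro x; split; auto. intros _ y Hy. exfalso; apply (H y Hy). }
  replace (Lub_Rbar (fun _ => True)) with p_infty. reflexivity.
  symmetry. apply is_lub_Rbar_unique. split.
  - intros x _. simpl; auto.
  - intros b Hb. destruct b as [r| |]; simpl; auto.
    + specialize (Hb (r + 1) I). simpl in Hb. lra.
    + specialize (Hb 0 I). simpl in Hb. auto.
Qed.

Lemma is_RInt_gen_lin (f : R -> R) u l : 0 < u ->
  is_RInt_gen f (Rbar_locally m_infty) (Rbar_locally p_infty) l ->
  is_RInt_gen (fun y => u * f (u * y)) (Rbar_locally m_infty) (Rbar_locally p_infty) l.
Proof.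
  intros Hu H. intros P HP. specialize (H P HP).
  destruct H as [Qa Qb HQa HQb HQ].
  exists (fun x => Qa (u * x)) (fun x => Qb (u * x)).
  - destruct HQa as [M HM]. exists (M / u). intros x Hx. apply HM.
    apply (Rmult_lt_compat_l u) in Hx; auto. replace (u * (M / u)) with M in Hx by (field; lra). auto.
  - destruct HQb as [M HM]. exists (M / u). intros x Hx. apply HM.
    apply (Rmult_lt_compat_l u) in Hx; auto. replace (u * (M / u)) with M in Hx by (field; lra). auto.
  - intros x y Hx Hy. destruct (HQ _ _ Hx Hy) as [l' [Hr Hp]]. exists l'; split; auto.
    simpl in *. 
    assert (Hr' : is_RInt f (u * x + 0) (u * y + 0) l') by (rewrite !Rplus_0_r; auto).
    apply is_RInt_comp_lin in Hr'.
    apply (is_RInt_ext (fun y0 => scal u (f (u * y0 + 0)))); auto.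
    intros t _. rewrite Rplus_0_r. reflexivity.
Qed.

Lemma is_RInt_gen_scale_iff (F : R -> R) K g l : 0 < K -> 0 < g ->
  (is_RInt_gen (fun x => K * F (x / g)) (Rbar_locally m_infty) (Rbar_locally p_infty) l <->
   is_RInt_gen F (Rbar_locally m_infty) (Rbar_locally p_infty) (l / (K * g))).
Proof.
  intros HK Hg. split; intro H.
  - apply is_RInt_gen_lin with (u := g) in H; auto.
    apply (is_RInt_gen_scal _ (/ (K * g))) in H.
    unfold scal in H; simpl in H; unfold mult in H; simpl in H.
    assert (E1 : (fun y => / (K * g) * (g * (K * F (g * y / g)))) = F).
    { apply functional_extensionality; intro y.
      replace (g * y / g) with y by (field; lra). field; lra. }
    assert (E2 : / (K * g) * l = l / (K * g)).
    { unfold Rdiv; ring. }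
    rewrite E1, E2 in H. exact H.
  - apply is_RInt_gen_lin with (u := / g) in H; [|apply Rinv_0_lt_compat; auto].
    apply (is_RInt_gen_scal _ (K * g)) in H.
    unfold scal in H; simpl in H; unfold mult in H; simpl in H.
    assert (E1 : (fun y => (K * g) * (/ g * F (/ g * y))) = (fun x => K * F (x / g))).
    { apply functional_extensionality; intro y.
      replace (/ g * y) with (y / g) by (unfold Rdiv; ring). field; lra. }
    assert (E2 : (K * g) * (l / (K * g)) = l).
    { field; lra. }
    rewrite E1, E2 in H. exact H.
Qed.

Lemma RInt_gen_scale (F : R -> R) K g : 0 < K -> 0 < g ->
  RInt_gen (fun x => K * F (x / g)) (Rbar_locally m_infty) (Rbar_locally p_infty) =
  K * g * RInt_gen F (Rbar_locally m_infty) (Rbar_locally p_infty).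
Proof.
  intros HK Hg.
  destruct (Classical_Prop.classic (exists l, is_RInt_gen F (Rbar_locally m_infty) (Rbar_locally p_infty) l)) as [[l Hl]|Hn].
  - rewrite (is_RInt_gen_unique F l Hl).
    apply is_RInt_gen_unique. apply is_RInt_gen_scale_iff; auto.
    assert (E : forall r : R, K * g * r / (K * g) = r) by (intro; field; split; apply Rgt_not_eq; auto).
    rewrite E. exact Hl.
  - rewrite (RInt_gen_noex F). rewrite RInt_gen_noex. symmetry; apply Rmult_0_r.
    intros l Hl. apply is_RInt_gen_scale_iff in Hl; auto. apply Hn; eauto.
    intros l Hl. apply Hn; eauto.
Qed.

Lemma Cmod2_scl a z : Cmod (scl a z) ^ 2 = a ^ 2 * Cmod z ^ 2.
Proof.
  destruct z as [x y]. unfold scl, Cmod; cbn [fst snd].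
  rewrite !pow2_sqrt. ring.
  apply Rplus_le_le_0_compat; apply pow2_ge_0.
  apply Rplus_le_le_0_compat; apply pow2_ge_0.
Qed.

Lemma L2norm_sc c g G : c <> 0 -> 0 < g -> L2norm (sc c g G) = Rabs c * sqrt g * L2norm G.
Proof.
  intros Hc Hg. unfold L2norm.
  assert (E : (fun x => Cmod (sc c g G x) ^ 2) = (fun x => c ^ 2 * (fun y => Cmod (G y) ^ 2) (x / g))).
  { apply functional_extensionality; intro x. unfold sc. apply Cmod2_scl. }
  rewrite E. rewrite (RInt_gen_scale (fun y => Cmod (G y) ^ 2) (c ^ 2) g); auto. 2: apply pow2_gt_0; auto.
  set (I := RInt_gen (fun y => Cmod (G y) ^ 2) (Rbar_locally m_infty) (Rbar_locally p_infty)).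
  assert (Hc2 : 0 < c ^ 2) by (apply pow2_gt_0; auto).
  destruct (Rle_lt_dec 0 I).
  - rewrite (sqrt_mult_alt (c ^ 2 * g) I) by (apply Rmult_le_pos; lra).
    rewrite (sqrt_mult_alt (c ^ 2) g) by lra.
    rewrite <- (sqrt_Rsqr_abs c). unfold Rsqr. replace (c ^ 2) with (c * c) by ring. reflexivity.
  - assert (0 < c ^ 2 * g) by (apply Rmult_lt_0_compat; lra).
    assert (c ^ 2 * g * I < 0). { nra. }
    rewrite (sqrt_neg_0 I), (sqrt_neg_0 (c ^ 2 * g * I)) by lra. ring.
Qed.

Lemma Rpower_1_base x : Rpower 1 x = 1.
Proof. unfold Rpower. rewrite ln_1, Rmult_0_r. apply exp_0. Qed.

Lemma gam1 m : gam m 1 = 1.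
Proof. unfold gam. apply Rpower_1_base. Qed.

Lemma gam_pos m h : 0 < h -> 0 < gam m h.
Proof. intros; unfold gam, Rpower. apply exp_pos. Qed.

Lemma gam_pow_S m h : 0 < h -> gam m h ^ (S m) = h.
Proof.
  intro Hh. unfold gam. rewrite <- Rpower_pow by (apply exp_pos).
  rewrite Rpower_mult. replace (1 / (INR m + 1) * INR (S m)) with 1.
  apply Rpower_1; auto. rewrite S_INR. field. pose proof (pos_INR m). lra.
Qed.

Lemma gam_pow_2m m h : 0 < h -> gam m h ^ (2 * m) = Rpower h (2 * INR m / (INR m + 1)).
Proof.
  intro Hh. unfold gam. rewrite <- Rpower_pow by (apply exp_pos).
  rewrite Rpower_mult. f_equal. rewrite mult_INR. simpl. field. pose proof (pos_INR m). lra.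
Qed.

Lemma RInt_scale0 (f : R -> R) k g x : 0 < g -> (forall z, continuous f z) ->
  RInt (fun y => k * f (y / g)) 0 x = k * g * RInt f 0 (x / g).
Proof.
  intros Hg Hc.
  assert (Hex : ex_RInt f (/ g * 0 + 0) (/ g * x + 0)) by (apply (@ex_RInt_continuous R_CompleteNormedModule); auto).
  pose proof (RInt_comp_lin f (/ g) 0 0 x Hex) as H1.
  pose proof (ex_RInt_comp_lin f (/ g) 0 0 x Hex) as H2.
  replace (/ g * 0 + 0) with 0 in H1 by ring. replace (/ g * x + 0) with (x / g) in H1 by (unfold Rdiv; ring).
  rewrite <- H1.
  transitivity (RInt (fun y => scal (k * g) (scal (/ g) (f (/ g * y + 0)))) 0 x).
  - apply RInt_ext. intros t _. unfold scal; simpl; unfold mult; simpl.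
    replace (/ g * t + 0) with (t / g) by (unfold Rdiv; ring). field. lra.
  - exact (RInt_scal _ 0 x (k * g) H2).
Qed.

Section S.
Variables (m : nat) (alpha mu : R) (chi : R -> R).
Hypothesis Halpha : 0 < alpha.
Hypothesis Hmu : 0 < mu.
Hypothesis Hm : (2 <= m)%nat.
Lemma INRm_nz : INR m <> 0.
Proof. apply not_0_INR. lia. Qed.

Definition Q1 (t : R) : C := Csqrt (Cplus (Eh m alpha mu 1) (RtoC (t ^ (2 * m) / INR m))).

Lemma Q1_in_snd t : 0 < snd (Cplus (Eh m alpha mu 1) (RtoC (t ^ (2 * m) / INR m))).
Proof.
  unfold Eh, Cplus, Cmult, RtoC; cbn [fst snd]. rewrite Rpower_1_base. lra.
Qed.

Lemma CD2_Q1 : CD2 Q1.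
Proof.
  unfold Q1. apply CD2_Csqrt. 2: apply Q1_in_snd.
  apply CD2_plus. apply CD2_const. apply CD2_RtoC. unfold Rdiv.
  apply (D2_mult (fun t => t ^ (2 * m)) (fun _ => / INR m)). apply (D2_pow (fun t => t)). apply D2_id.
  apply D2_const.
Qed.

Lemma Q1_snd_pos t : 0 < snd (Q1 t).
Proof. unfold Q1. apply Csqrt_snd_pos. apply Q1_in_snd. Qed.

Lemma Q1_fst_pos t : 0 < fst (Q1 t).
Proof. unfold Q1. apply Csqrt_fst_pos. pose proof (Q1_in_snd t). lra. Qed.

Lemma D2_cont f : D2 f -> forall z, continuous f z.
Proof. intros [H _] z. apply (@ex_derive_continuous R_AbsRing R_NormedModule). apply H. Qed.

Lemma Q_scale h y : 0 < h ->
  Csqrt (Cplus (Eh m alpha mu h) (RtoC (y ^ (2 * m) / INR m))) = scl (gam m h ^ m) (Q1 (y / gam m h)).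
Proof.
  intro Hh. pose proof (gam_pos m h Hh) as Hg. unfold Q1.
  rewrite <- (sqrt_pow2 (gam m h ^ m)) by (apply pow_le; lra).
  rewrite <- Csqrt_scl by (apply pow2_gt_0; apply pow_nonzero; lra).
  f_equal. unfold Eh, Cplus, Cmult, RtoC, scl; cbn [fst snd].
  rewrite Rpower_1_base. rewrite <- gam_pow_2m by auto.
  unfold Rdiv. rewrite Rpow_mult_distr, pow_inv.
  replace ((gam m h ^ m) ^ 2) with (gam m h ^ (2 * m)).
  2: { rewrite <- pow_mult. f_equal. lia. }
  assert (gam m h ^ (2 * m) <> 0) by (apply pow_nonzero; lra).
  pose proof INRm_nz. f_equal; field; auto.
Qed.

Lemma phi_scale h : 0 < h ->
  phi m alpha mu h = sc (gam m h ^ S m) (gam m h) (phi m alpha mu 1).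
Proof.
  intro Hh. pose proof (gam_pos m h Hh) as Hg.
  apply functional_extensionality; intro x.
  unfold phi, CRInt, sc, scl; cbn [fst snd].
  change (gam m h ^ S m) with (gam m h * gam m h ^ m).
  destruct CD2_Q1 as [Hf Hs].
  f_equal.
  - transitivity (RInt (fun y => gam m h ^ m * fst (Q1 (y / gam m h))) 0 x).
    { apply RInt_ext. intros t _. rewrite Q_scale by auto. reflexivity. }
    pose proof (RInt_scale0 (fun t => fst (Q1 t)) (gam m h ^ m) (gam m h) x Hg
      (D2_cont _ Hf)) as E.
    etransitivity; [exact E|]. rewrite (Rmult_comm (gam m h ^ m) (gam m h)). reflexivity.
  - transitivity (RInt (fun y => gam m h ^ m * snd (Q1 (y / gam m h))) 0 x).
    { apply RInt_ext. intros t _. rewrite Q_scale by auto. reflexivity. }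
    pose proof (RInt_scale0 (fun t => snd (Q1 t)) (gam m h ^ m) (gam m h) x Hg
      (D2_cont _ Hs)) as E.
    etransitivity; [exact E|]. rewrite (Rmult_comm (gam m h ^ m) (gam m h)). reflexivity.
Qed.

Lemma RInt_is_derive (f : R -> R) x : (forall z, continuous f z) ->
  is_derive (fun y => RInt f 0 y) x (f x).
Proof.
  intro Hc. apply (is_derive_RInt f (fun y => RInt f 0 y) 0 x); auto.
  apply filter_forall. intro b. apply (@RInt_correct R_CompleteNormedModule).
  apply (@ex_RInt_continuous R_CompleteNormedModule); auto.
Qed.

Lemma Phi_fst_deriv x : is_derive (fun y => fst (phi m alpha mu 1 y)) x (fst (Q1 x)).
Proof.
  apply (RInt_is_derive (fun t => fst (Q1 t))). apply D2_cont. apply CD2_Q1.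
Qed.

Lemma Phi_snd_deriv x : is_derive (fun y => snd (phi m alpha mu 1 y)) x (snd (Q1 x)).
Proof.
  apply (RInt_is_derive (fun t => snd (Q1 t))). apply D2_cont. apply CD2_Q1.
Qed.

Lemma phi1_1 : phi1 m alpha mu 1 = Q1.
Proof.
  apply functional_extensionality; intro x. unfold phi1, CDerive.
  replace (Derive (fun t => fst (phi m alpha mu 1 t)) x) with (fst (Q1 x))
    by (symmetry; apply is_derive_unique, Phi_fst_deriv).
  replace (Derive (fun t => snd (phi m alpha mu 1 t)) x) with (snd (Q1 x))
    by (symmetry; apply is_derive_unique, Phi_snd_deriv).
  destruct (Q1 x); reflexivity.
Qed.

Lemma CD2_Phi : CD2 (phi m alpha mu 1).
Proof.
  destruct CD2_Q1 as [[F1 F2] [S1 S2]]. split; split.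
  - intro x. eexists. apply Phi_fst_deriv.
  - apply (D1_ext (fun x => fst (Q1 x))); auto.
    intro x. symmetry. apply is_derive_unique. apply Phi_fst_deriv.
  - intro x. eexists. apply Phi_snd_deriv.
  - apply (D1_ext (fun x => snd (Q1 x))); auto.
    intro x. symmetry. apply is_derive_unique. apply Phi_snd_deriv.
Qed.

Lemma CD1_phi1 : CD1 (phi1 m alpha mu 1).
Proof. rewrite phi1_1. apply CD2_CD1, CD2_Q1. Qed.

Lemma CD1_phi2 : CD1 (phi2 m alpha mu 1).
Proof.
  unfold phi2. rewrite phi1_1. destruct CD2_Q1 as [[F1 F2] [S1 S2]]. split; auto.
Qed.

Lemma phi1_scale h : 0 < h ->
  phi1 m alpha mu h = sc (gam m h ^ S m / gam m h) (gam m h) (phi1 m alpha mu 1).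
Proof.
  intro Hh. pose proof (gam_pos m h Hh). unfold phi1 at 1. rewrite phi_scale by auto.
  rewrite CDerive_sc; auto. lra. apply CD2_CD1, CD2_Phi.
Qed.

Lemma phi2_scale h : 0 < h ->
  phi2 m alpha mu h = sc (gam m h ^ S m / gam m h / gam m h) (gam m h) (phi2 m alpha mu 1).
Proof.
  intro Hh. pose proof (gam_pos m h Hh). unfold phi2 at 1. rewrite phi1_scale by auto.
  rewrite CDerive_sc; auto. lra. apply CD1_phi1.
Qed.

Lemma phi3_scale h : 0 < h ->
  phi3 m alpha mu h = sc (gam m h ^ S m / gam m h / gam m h / gam m h) (gam m h) (phi3 m alpha mu 1).
Proof.
  intro Hh. pose proof (gam_pos m h Hh). unfold phi3 at 1. rewrite phi2_scale by auto.
  rewrite CDerive_sc; auto. lra. apply CD1_phi2.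
Qed.

End S.

Definition ffe (hh : R) (p1 p2 p3 : C) : C :=
  Cmult (RtoC (- hh ^ 2))
    (Cminus (Cmult (RtoC (3/4)) (Cmult (Cinv (Cmult p1 p1)) (Cmult p2 p2)))
            (Cmult (RtoC (1/2)) (Cmult (Cinv p1) p3))).

Lemma Cmult_scl_l a z w : Cmult (scl a z) w = scl a (Cmult z w).
Proof. destruct z, w; unfold scl, Cmult; cbn [fst snd]; f_equal; ring. Qed.

Lemma Cmult_scl_inv a z : a <> 0 -> Cmult (scl a z) (RtoC (/ a)) = Cmult z (RtoC (/ 1)).
Proof. intro. destruct z; unfold scl, Cmult, RtoC; cbn [fst snd]; f_equal; field; auto. Qed.

Lemma ffe_scale hh k g a b c : k <> 0 -> g <> 0 ->
  ffe hh (scl k a) (scl (k / g) b) (scl (k / g / g) c) = scl (hh ^ 2 / g ^ 2) (ffe 1 a b c).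
Proof.
  intros Hk Hg. unfold ffe.
  rewrite !Cmult_scl. rewrite (Cinv_scl (k * k)) by (apply Rmult_integral_contrapositive; auto).
  rewrite (Cinv_scl k) by auto. rewrite !Cmult_scl. rewrite !CmultR_scl.
  replace (/ (k * k) * (k / g * (k / g))) with (/ g ^ 2) by (field; auto).
  replace (/ k * (k / g / g)) with (/ g ^ 2) by (field; auto).
  rewrite Cminus_scl, CmultR_scl.
  destruct (Cminus _ _) as [u v]. unfold scl, Cmult, RtoC; cbn [fst snd]. f_equal; field; auto.
Qed.

Section G.
Variables (m : nat) (alpha mu : R) (chi : R -> R).
Hypothesis Halpha : 0 < alpha.
Hypothesis Hmu : 0 < mu.
Hypothesis Hm : (2 <= m)%nat.
Hypothesis Hchi : D2 chi.

Lemma uu1_eq : uu m alpha mu 1 =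
  fun s => Cmult (Cinv (Csqrt (Q1 m alpha mu s))) (Cexp (Cmult Ci (Cmult (phi m alpha mu 1 s) (RtoC (/ 1))))).
Proof. unfold uu. rewrite phi1_1; auto. Qed.

Lemma CD2_U : CD2 (uu m alpha mu 1).
Proof.
  rewrite uu1_eq. apply CD2_mult.
  - apply CD2_Cinv. apply CD2_Csqrt. apply CD2_Q1; auto. intro; apply Q1_snd_pos; auto.
    intro s. assert (0 < fst (Csqrt (Q1 m alpha mu s))).
    { apply Csqrt_fst_pos. pose proof (Q1_snd_pos m alpha mu Hmu s). lra. }
    assert (0 < fst (Csqrt (Q1 m alpha mu s)) ^ 2) by (apply pow2_gt_0; lra).
    pose proof (pow2_ge_0 (snd (Csqrt (Q1 m alpha mu s)))). lra.
  - apply CD2_Cexp. apply CD2_mult. apply CD2_const. apply CD2_mult. apply CD2_Phi; auto. apply CD2_const.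
Qed.

Definition W (s : R) : C := Cmult (RtoC (chi s)) (uu m alpha mu 1 s).

Lemma CD2_W : CD2 W.
Proof. unfold W. apply CD2_mult. apply CD2_RtoC; auto. apply CD2_U. Qed.

Definition cu (h : R) : R := / sqrt (gam m h ^ S m / gam m h).

Lemma k1_pos h : 0 < h -> 0 < gam m h ^ S m / gam m h.
Proof. intro Hh. pose proof (gam_pos m h Hh). unfold Rdiv. apply Rmult_lt_0_compat.
  apply pow_lt; auto. apply Rinv_0_lt_compat; auto. Qed.

Lemma cu_pos h : 0 < h -> 0 < cu h.
Proof. intro Hh. unfold cu. apply Rinv_0_lt_compat, sqrt_lt_R0, k1_pos; auto. Qed.

Lemma uu_scale h : 0 < h -> uu m alpha mu h = sc (cu h) (gam m h) (uu m alpha mu 1).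
Proof.
  intro Hh. pose proof (gam_pos m h Hh). pose proof (k1_pos h Hh).
  apply functional_extensionality; intro x.
  unfold uu at 1. rewrite phi1_scale, phi_scale by auto. unfold sc.
  rewrite Csqrt_scl by auto. rewrite Cinv_scl by (apply Rgt_not_eq, sqrt_lt_R0; auto).
  rewrite gam_pow_S at 2 by auto. rewrite Cmult_scl_inv by lra.
  rewrite Cmult_scl_l. unfold cu. reflexivity.
Qed.

Lemma chig1 G : chig chi m 1 G = fun s => Cmult (RtoC (chi s)) (G s).
Proof.
  apply functional_extensionality; intro x. unfold chig. rewrite gam1.
  replace (x / 1) with x by field. reflexivity.
Qed.

Lemma ut1_eq : ut chi m alpha mu 1 = W.
Proof. unfold ut. rewrite chig1. reflexivity. Qed.

Lemma ut_scale h : 0 < h -> ut chi m alpha mu h = sc (cu h) (gam m h) W.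
Proof. intro Hh. unfold ut. rewrite uu_scale by auto. rewrite chig_sc. reflexivity. Qed.

Lemma ff_scale h x : 0 < h ->
  ff m alpha mu h x = scl (h ^ 2 / gam m h ^ 2) (ff m alpha mu 1 (x / gam m h)).
Proof.
  intro Hh. pose proof (gam_pos m h Hh). pose proof (k1_pos h Hh).
  change (ff m alpha mu h x) with (ffe h (phi1 m alpha mu h x) (phi2 m alpha mu h x) (phi3 m alpha mu h x)).
  rewrite phi1_scale, phi2_scale, phi3_scale by auto. unfold sc.
  rewrite ffe_scale by lra. reflexivity.
Qed.

Definition K (h : R) : R := cu h * h / gam m h * h / gam m h.

Lemma Rem_scale h : 0 < h -> Rem chi m alpha mu h = sc (K h) (gam m h) (Rem chi m alpha mu 1).
Proof.
  intro Hh. pose proof (gam_pos m h Hh).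
  assert (CU : CD1 (uu m alpha mu 1)) by (apply CD2_CD1, CD2_U).
  assert (CW : CD1 W) by (apply CD2_CD1, CD2_W).
  apply functional_extensionality; intro x.
  unfold Rem at 1. rewrite ff_scale by auto. rewrite ut_scale by auto.
  rewrite uu_scale by auto. rewrite chig_sc.
  rewrite (hD_sc h (cu h) (gam m h) (fun s => Cmult (RtoC (chi s)) (uu m alpha mu 1 s))) by (auto; lra).
  rewrite (hD_sc h (cu h * h / gam m h) (gam m h)) by (try lra; apply CD1_hD1, CD2_W).
  rewrite (hD_sc h (cu h) (gam m h) (uu m alpha mu 1)) by (auto; lra).
  rewrite (hD_sc h (cu h * h / gam m h) (gam m h)) by (try lra; apply CD1_hD1, CD2_U).
  rewrite chig_sc. unfold sc.
  rewrite Cmult_scl, Cminus_scl.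
  replace (h ^ 2 / gam m h ^ 2 * cu h) with (cu h * h / gam m h * h / gam m h) by (field; lra).
  rewrite Cplus_scl. fold (K h). f_equal.
  unfold Rem. rewrite ut1_eq, chig1, chig1. reflexivity.
Qed.

End G.

Lemma RInt_zero_on (F : R -> R) a b : (forall x, Rmin a b < x < Rmax a b -> F x = 0) -> RInt F a b = 0.
Proof.
  intro H. transitivity (RInt (fun _ : R => 0) a b).
  apply RInt_ext; auto.
  rewrite RInt_const. unfold scal; simpl; unfold mult; simpl. ring.
Qed.

Lemma exR (F : R -> R) a b : (forall z, continuous F z) -> ex_RInt F a b.
Proof. intro; apply (@ex_RInt_continuous R_CompleteNormedModule); auto. Qed.

Lemma Chasles3 (F : R -> R) a b c : (forall z, continuous F z) ->
  RInt F a c = RInt F a b + RInt F b c.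
Proof.
  intro Hc. symmetry. exact (RInt_Chasles F a b c (exR F a b Hc) (exR F b c Hc)).
Qed.

Lemma RInt_gen_pos (F : R -> R) : (forall z, continuous F z) ->
  (forall x, 2 < Rabs x -> F x = 0) -> (forall x, 0 <= F x) -> (forall x, -1 <= x <= 1 -> 0 < F x) ->
  0 < RInt_gen F (Rbar_locally m_infty) (Rbar_locally p_infty).
Proof.
  intros Hc Hz Hn Hp.
  assert (Hgen : is_RInt_gen F (Rbar_locally m_infty) (Rbar_locally p_infty) (RInt F (-2) 2)).
  { intros P HP.
    exists (fun a => a < -2) (fun b => 2 < b).
    - exists (-2). auto.
    - exists 2. auto.
    - intros a b Ha Hb. exists (RInt F a b). split.
      + apply (@RInt_correct R_CompleteNormedModule). apply exR; auto.
      + replace (RInt F a b) with (RInt F (-2) 2). apply locally_singleton; auto.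
        rewrite (Chasles3 F a (-2) b Hc), (Chasles3 F (-2) 2 b Hc).
        rewrite (RInt_zero_on F a (-2)), (RInt_zero_on F 2 b). rewrite Rplus_0_l, Rplus_0_r. reflexivity.
        * intros x Hx. apply Hz. rewrite Rmin_left in Hx by lra. rewrite Rmax_right in Hx by lra.
          rewrite Rabs_right; lra.
        * intros x Hx. apply Hz. rewrite Rmin_left in Hx by lra. rewrite Rmax_right in Hx by lra.
          rewrite Rabs_left; lra. }
  rewrite (is_RInt_gen_unique F _ Hgen).
  rewrite (Chasles3 F (-2) (-1) 2 Hc), (Chasles3 F (-1) 1 2 Hc).
  assert (0 <= RInt F (-2) (-1)) by (apply RInt_ge_0; [lra| apply exR; auto | auto]).
  assert (0 <= RInt F 1 2) by (apply RInt_ge_0; [lra| apply exR; auto | auto]).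
  assert (0 < RInt F (-1) 1). { apply RInt_gt_0. lra. intros; apply Hp; lra. intros; apply Hc. }
  lra.
Qed.

Lemma CmultR_is_scl c z : Cmult (RtoC c) z = scl c z.
Proof. destruct z; unfold Cmult, RtoC, scl; cbn [fst snd]; f_equal; ring. Qed.

Lemma Cmod2_eq z : Cmod z ^ 2 = fst z ^ 2 + snd z ^ 2.
Proof. unfold Cmod. rewrite pow2_sqrt. reflexivity. apply Rplus_le_le_0_compat; apply pow2_ge_0. Qed.

Lemma Cexp_mod_pos e : 0 < Cmod (Cexp e).
Proof.
  unfold Cexp, Cmod; cbn [fst snd]. apply sqrt_lt_R0.
  pose proof (sin2_cos2 (snd e)). unfold Rsqr in H.
  pose proof (exp_pos (fst e)).
  replace ((exp (fst e) * cos (snd e)) ^ 2 + (exp (fst e) * sin (snd e)) ^ 2)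
    with (exp (fst e) ^ 2 * (sin (snd e) * sin (snd e) + cos (snd e) * cos (snd e))) by ring.
  rewrite H. rewrite Rmult_1_r. apply pow2_gt_0. lra.
Qed.

Section I.
Variables (m : nat) (alpha mu : R) (chi : R -> R).
Hypothesis Halpha : 0 < alpha.
Hypothesis Hmu : 0 < mu.
Hypothesis Hm : (2 <= m)%nat.
Hypothesis Hchi : D2 chi.
Hypothesis Hchi1 : forall s, Rabs s <= 1 -> chi s = 1.
Hypothesis Hchi0 : forall s, 2 < Rabs s -> chi s = 0.

Lemma U_mod_pos s : 0 < Cmod (uu m alpha mu 1 s).
Proof.
  rewrite uu1_eq by auto. rewrite Cmod_mult.
  apply Rmult_lt_0_compat. 2: apply Cexp_mod_pos.
  assert (Hs : 0 < fst (Csqrt (Q1 m alpha mu s))).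
  { apply Csqrt_fst_pos. pose proof (Q1_snd_pos m alpha mu Hmu s). lra. }
  assert (Hnz : Csqrt (Q1 m alpha mu s) <> 0).
  { intro E. rewrite E in Hs. simpl in Hs. lra. }
  change (Cinv (Csqrt (Q1 m alpha mu s))) with (/ (Csqrt (Q1 m alpha mu s)))%C.
  rewrite Cmod_inv by auto. apply Rinv_0_lt_compat. apply Cmod_gt_0; auto.
Qed.

Lemma L2W_pos : 0 < L2norm (W m alpha mu chi).
Proof.
  unfold L2norm. apply sqrt_lt_R0. apply RInt_gen_pos.
  - intro z. apply (continuous_ext (fun x => fst (W m alpha mu chi x) ^ 2 + snd (W m alpha mu chi x) ^ 2)).
    intro x. rewrite Cmod2_eq. reflexivity.
    apply D2_cont. assert (CW : CD2 (W m alpha mu chi)) by (apply CD2_W; auto). destruct CW as [H1 H2].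
    apply (D2_plus (fun x => fst (W m alpha mu chi x) ^ 2)); apply D2_pow; auto.
  - intros x Hx. unfold W. rewrite CmultR_is_scl, Cmod2_scl, Hchi0 by auto. ring.
  - intros x. apply pow2_ge_0.
  - intros x Hx. unfold W. rewrite CmultR_is_scl, Cmod2_scl, Hchi1.
    rewrite pow1, Rmult_1_l. apply pow2_gt_0. pose proof (U_mod_pos x). lra.
    apply Rabs_le; lra.
Qed.

End I.

Theorem lemma5p2 (m : nat) (alpha mu : R) (chi : R -> R) :
  (2 <= m)%nat -> 0 < alpha -> 0 < mu ->
  (forall n x, ex_derive_n chi n x) ->
  (forall s, Rabs s <= 1 -> chi s = 1) ->
  (forall s, 2 < Rabs s -> chi s = 0) ->
  exists C0 : R, 0 <= C0 /\
    forall h : R, 0 < h -> h <= 1 ->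
      L2norm (Rem chi m alpha mu h)
        <= C0 * Rpower h (2 * INR m / (INR m + 1)) * L2norm (ut chi m alpha mu h).
Proof.
  intros Hm Ha Hmu Hder H1 H0.
  assert (Hchi : D2 chi).
  { split; intro x. exact (Hder 1%nat x). exact (Hder 2%nat x). }
  assert (HB : 0 < L2norm (W m alpha mu chi)) by (apply L2W_pos; auto).
  exists (L2norm (Rem chi m alpha mu 1) / L2norm (W m alpha mu chi)). split.
  { unfold Rdiv. apply Rmult_le_pos. unfold L2norm; apply sqrt_pos. left; apply Rinv_0_lt_compat; auto. }
  intros h Hh _.
  pose proof (gam_pos m h Hh) as Hg. assert (Hcu : 0 < cu m h) by (apply cu_pos; auto).
  assert (HK : 0 < K m h).
  { unfold K, Rdiv. repeat apply Rmult_lt_0_compat; auto; apply Rinv_0_lt_compat; auto. }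
  rewrite (Rem_scale m alpha mu chi) by auto.
  rewrite (ut_scale m alpha mu chi) by auto.
  rewrite !L2norm_sc by lra.
  rewrite <- gam_pow_2m by auto.
  assert (Hp : gam m h ^ (2 * m) * (gam m h * gam m h) = h * h).
  { pose proof (gam_pow_S m h Hh) as ES. set (g := gam m h) in *.
    rewrite <- ES. replace (g * g) with (g ^ 2) by ring.
    rewrite <- !pow_add. f_equal; lia. }
  assert (Hp' : gam m h ^ (2 * m) = h * h / (gam m h * gam m h)).
  { rewrite <- Hp. field. lra. }
  rewrite Hp'. rewrite !Rabs_right by lra.
  apply Req_le. unfold K. field. split; lra.
Qed.
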